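(* Let $n\in\mathbb N$ be such that $n+1$ is an Hadamard number. Then there exists a regular $n$-dimensional simplex $S\subset Q_n$ with the following properties: (1) $\mathrm{ver}(S)\subset \mathrm{ver}(Q_n)$; (2) $\xi_n=\xi(S)=\alpha(S)=n$; (3) $d_1(S)=\dots=d_n(S)=1$; (4) the simplex $nS$ is circumscribed around $Q_n$ in such a way that each $(n-1)$-dimensional face of $nS$ contains exactly one vertex of $Q_n$.
   Context: $Q_n=[0,1]^n$. An Hadamard matrix of order $m$ is an $m\times m$ matrix $H$ with entries $\pm1$ satisfying $H^{-1}=\frac1m H^T$; $m$ is an Hadamard number if such a matrix exists. For a convex body $\Omega\subset\mathbb R^n$ (compact convex set with nonempty interior) and $\sigma>0$, $\sigma\Omega$ denotes the image of $\Omega$ under the homothety with center at the center of gravity of $\Omega$ and ratio $\sigma$. For convex bodies $\Omega_1,\Omega_2$, $\xi(\Omega_1;\Omega_2)$ is the minimal $\sigma\ge1$ with $\Omega_1\subset\sigma\Omega_2$, and $\alpha(\Omega_1;\Omega_2)$ is the minimal $\sigma>0$ such that $\Omega_1$ is contained in a translate of $\sigma\Omega_2$. For a simplex $S$, $\xi(S):=\xi(Q_n;S)$, $\alpha(S):=\alpha(Q_n;S)$, and $\xi_n:=\min\{\xi(S): S\subset Q_n \text{ a nondegenerate } n\text{-dimensional simplex}\}$. The $i$th axial diameter $d_i(\Omega)$ is the maximal length of a segment contained in $\Omega$ and parallel to the $x_i$-axis. A simplex is circumscribed around a convex body $\Omega$ if $\Omega\subset S$ and each $(n-1)$-dimensional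 face of $S$ contains a point of $\Omega$. $\mathrm{ver}(\cdot)$ denotes the vertex set of a polytope. *)

(* Defs.v *)
From HB Require Import structures.
From mathcomp Require Import all_boot all_order all_algebra.
From mathcomp Require Import boolp classical_sets reals.
Set Implicit Arguments. Unset Strict Implicit. Unset Printing Implicit Defensive.
Import Order.TTheory GRing.Theory Num.Theory.
Local Open Scope ring_scope.
Local Open Scope classical_set_scope.

Section Defs.
Variable R : realType.
Variable n : nat.
Local Notation pt := 'rV[R]_n.

Definition cube : set pt := [set x | forall j, 0 <= x ord0 j <= 1].
Definition cube_vertex : set pt := [set x | forall j, x ord0 j = 0 \/ x ord0 j = 1].

Definition simplex := 'I_n.+1 -> pt.

Definition conv_hull (v : simplex) : set pt :=
  [set x | exists l : 'I_n.+1 -> R,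
     (forall i, 0 <= l i) /\ \sum_i l i = 1 /\ x = \sum_i l i *: v i].

Definition nondeg_simplex (v : simplex) : Prop :=
  forall l : 'I_n.+1 -> R, \sum_i l i = 0 -> \sum_i l i *: v i = 0 ->
    forall i, l i = 0.

Definition dist2 (x y : pt) : R := \sum_j (x ord0 j - y ord0 j) ^+ 2.

Definition regular_simplex (v : simplex) : Prop :=
  forall i j k l, i != j -> k != l -> dist2 (v i) (v j) = dist2 (v k) (v l).

Definition centroid (v : simplex) : pt := (n.+1)%:R^-1 *: \sum_i v i.

Definition homothety (v : simplex) (s : R) : set pt :=
  [set centroid v + s *: (x - centroid v) | x in conv_hull v].

Definition homothety_vertices (v : simplex) (s : R) : simplex :=
  fun i => centroid v + s *: (v i - centroid v).

Definition is_min (P : set R) (m : R) : Prop := P m /\ forall s, P s -> m <= s.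
Definition is_max (P : set R) (m : R) : Prop := P m /\ forall s, P s -> s <= m.

Definition xi_eq (v : simplex) (m : R) : Prop :=
  is_min [set s | 1 <= s /\ cube `<=` homothety v s] m.

Definition alpha_eq (v : simplex) (m : R) : Prop :=
  is_min [set s | 0 < s /\ exists t : pt, cube `<=` [set t + y | y in homothety v s]] m.

Definition xin_eq (m : R) : Prop :=
  is_min [set s | exists v : simplex,
            nondeg_simplex v /\ conv_hull v `<=` cube /\ xi_eq v s] m.

Definition unit_vec (i : 'I_n) : pt := delta_mx ord0 i.

Definition axial_segment (K : set pt) (i : 'I_n) (l : R) : Prop :=
  0 <= l /\ exists x : pt, forall t : R, 0 <= t <= 1 -> K (x + (t * l) *: unit_vec i).

Definition axial_diam_eq (K : set pt) (i : 'I_n) (d : R) : Prop :=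
  is_max (axial_segment K i) d.

Definition facet (w : simplex) (k : 'I_n.+1) : set pt :=
  [set x | exists l : 'I_n.+1 -> R,
     (forall i, 0 <= l i) /\ \sum_i l i = 1 /\ l k = 0 /\ x = \sum_i l i *: w i].

Definition circumscribed (w : simplex) (K : set pt) : Prop :=
  K `<=` conv_hull w /\ forall k, exists x, K x /\ facet w k x.

End Defs.

Definition hadamard_number (m : nat) : Prop :=
  exists H : 'M[rat]_m, (forall i j, H i j = 1 \/ H i j = -1) /\
    H \in unitmx /\ invmx H = (m%:R)^-1 *: H^T.

(* Main.v *)
Require Import Defs.
From mathcomp Require Import all_boot all_order all_algebra.
From mathcomp Require Import boolp classical_sets reals.
From mathcomp Require Import ring lra.
Import Order.TTheory GRing.Theory Num.Theory.
Local Open Scope ring_scope.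
Local Open Scope classical_set_scope.
Set Implicit Arguments. Unset Strict Implicit. Unset Printing Implicit Defensive.

Section Bary.
Variable R : realType.
Variable n : nat.
Local Notation pt := 'rV[R]_n.
Implicit Types v : simplex R n.

Definition bary v (lam : pt -> 'I_n.+1 -> R) :=
  forall z, \sum_k lam z k = 1 /\ \sum_k lam z k *: v k = z.

Lemma nondeg_uniq v (mu mu' : 'I_n.+1 -> R) : nondeg_simplex v ->
  \sum_k mu k = \sum_k mu' k -> \sum_k mu k *: v k = \sum_k mu' k *: v k ->
  forall k, mu k = mu' k.
Proof.
move=> nd s1 s2 k; apply/eqP; rewrite -subr_eq0; apply/eqP.
apply: (nd (fun k => mu k - mu' k)) => //.
  by rewrite sumrB s1 subrr.
by rewrite (eq_bigr (fun k => mu k *: v k - mu' k *: v k)) ?sumrB ?s2 ?subrr // => i _; rewrite scalerBl.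
Qed.

Variables (v : simplex R n) (lam : pt -> 'I_n.+1 -> R).
Hypothesis nd : nondeg_simplex v.
Hypothesis bv : bary v lam.

Lemma lam_comb (mu : 'I_n.+1 -> R) : \sum_k mu k = 1 ->
  forall k, lam (\sum_i mu i *: v i) k = mu k.
Proof.
move=> s1 k; apply: (nondeg_uniq nd); first by rewrite (proj1 (bv _)).
exact: (proj2 (bv _)).
Qed.

Lemma lam_aff2 (r : R) p q k :
  lam (r *: p + (1 - r) *: q) k = r * lam p k + (1 - r) * lam q k.
Proof.
have := lam_comb (mu := fun i => r * lam p i + (1 - r) * lam q i).
move=> H; rewrite -H.
  congr (lam _ k).
  rewrite (eq_bigr (fun i => r *: (lam p i *: v i) + (1 - r) *: (lam q i *: v i))).
    by rewrite big_split /= -!scaler_sumr (proj2 (bv p)) (proj2 (bv q)).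
  by move=> i _; rewrite scalerDl !scalerA.
rewrite big_split /= -!mulr_sumr (proj1 (bv p)) (proj1 (bv q)); ring.
Qed.

Definition L z k := lam z k - lam 0 k.

Lemma L0 k : L 0 k = 0. Proof. by rewrite /L subrr. Qed.

Lemma LZ r z k : L (r *: z) k = r * L z k.
Proof.
have -> : r *: z = r *: z + (1 - r) *: 0 by rewrite scaler0 addr0.
rewrite /L lam_aff2; ring.
Qed.

Lemma LD p q k : L (p + q) k = L p k + L q k.
Proof.
have e : p + q = 2%:R *: ((2%:R^-1 *: p + (1 - 2%:R^-1) *: q)).
  rewrite scalerDr !scalerA mulrBr mulr1 divff ?pnatr_eq0 //.
  have -> : (2%:R - 1 : R) = 1 by lra.
  by rewrite !scale1r.
rewrite e LZ /L lam_aff2.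
have -> : (1 - 2%:R^-1 : R) = 2%:R^-1.
  by field.
by field.
Qed.

Lemma LN z k : L (- z) k = - L z k.
Proof. by rewrite -scaleN1r LZ mulN1r. Qed.

Lemma LB p q k : L (p - q) k = L p k - L q k.
Proof. by rewrite LD LN. Qed.

Lemma Lsum (I : Type) (r : seq I) (F : I -> pt) k :
  L (\sum_(i <- r) F i) k = \sum_(i <- r) L (F i) k.
Proof.
elim: r => [|a r IH]; first by rewrite !big_nil L0.
by rewrite !big_cons LD IH.
Qed.

Lemma sumL z : \sum_k L z k = 0.
Proof. by rewrite /L sumrB (proj1 (bv z)) (proj1 (bv 0)) subrr. Qed.

Lemma sumLv z : \sum_k L z k *: v k = z.
Proof.
rewrite /L (eq_bigr (fun k => lam z k *: v k - lam 0 k *: v k)).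
  by rewrite sumrB (proj2 (bv z)) (proj2 (bv 0)) subr0.
by move=> k _; rewrite scalerBl.
Qed.

Lemma lam_centroid k : lam (centroid v) k = (n.+1)%:R^-1.
Proof.
rewrite /centroid scaler_sumr.
apply: (lam_comb (mu := fun _ => (n.+1)%:R^-1)).
by rewrite sumr_const card_ord -[_ *+ _]mulr_natr mulVf ?pnatr_eq0.
Qed.

Lemma lam_conv z : conv_hull v z -> forall k, 0 <= lam z k.
Proof. by move=> [l [l0 [l1 ->]]] k; rewrite lam_comb. Qed.

Lemma conv_lam z : (forall k, 0 <= lam z k) -> conv_hull v z.
Proof. move=> H; exists (lam z); split => //; split; [exact: (proj1 (bv z))| exact/esym/(proj2 (bv z))]. Qed.

End Bary.

Section Exist.
Variable R : realType.
Variable n : nat.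
Local Notation pt := 'rV[R]_n.
Variable v : simplex R n.
Hypothesis nd : nondeg_simplex v.

Definition ext (z : pt) : 'rV[R]_n.+1 :=
  \row_c (if unlift ord0 c is Some j then z ord0 j else 1).
Definition Amx : 'M[R]_n.+1 := \matrix_(k, c) ext (v k) ord0 c.

Lemma rowA (u : 'rV[R]_n.+1) :
  (u *m Amx = 0) <-> (\sum_k u ord0 k = 0 /\ \sum_k u ord0 k *: v k = 0).
Proof.
split.
  move/rowP => H; split.
    have := H ord0; rewrite !mxE => e; rewrite -[X in _ = X]e; apply: eq_bigr => k _.
    by rewrite !mxE unlift_none mulr1.
  apply/rowP => j; have := H (lift ord0 j); rewrite !mxE => e; rewrite -[X in _ = X]e.
  rewrite summxE; apply: eq_bigr => k _.
  by rewrite !mxE liftK mulrC.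
move=> [H1 H2]; apply/rowP => c; rewrite !mxE.
case e: (unlift ord0 c) => [j|].
  have := congr1 (fun M : pt => M ord0 j) H2; rewrite summxE !mxE => e'; rewrite -[X in _ = X]e'.
  by apply: eq_bigr => k _; rewrite !mxE e mulrC.
rewrite -[X in _ = X]H1; apply: eq_bigr => k _; by rewrite !mxE e mulr1.
Qed.

Lemma Aunit : Amx \in unitmx.
Proof.
rewrite -row_free_unit; apply: inj_row_free => u /rowA [H1 H2].
apply/rowP => k; rewrite mxE.

by have := nd H1 H2 k.
Qed.

Definition blam (z : pt) (k : 'I_n.+1) := (ext z *m invmx Amx) ord0 k.

Lemma blam_bary : bary v blam.
Proof.
move=> z.
have : (ext z *m invmx Amx) *m Amx = ext z by rewrite mulmxKV // Aunit.
move/rowP => H; split.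
  have := H ord0; rewrite !mxE unlift_none => e; rewrite -[X in _ = X]e.
  by apply: eq_bigr => k _; rewrite [Amx _ _]mxE [ext _ _ _]mxE unlift_none mulr1.
apply/rowP => j; have := H (lift ord0 j); rewrite [ext z _ _]mxE liftK => e.
rewrite -[RHS]e summxE [RHS]mxE; apply: eq_bigr => k _.
by rewrite [Amx _ _]mxE [ext _ _ _]mxE liftK mxE mulrC.
Qed.

End Exist.

Section Lower.
Variable R : realType.
Variable n : nat.
Local Notation pt := 'rV[R]_n.

Lemma vert_conv (v : simplex R n) k : conv_hull v (v k).
Proof.
exists (fun i => (i == k)%:R); split; first by move=> i; rewrite ler0n.
split.
  by rewrite (bigD1 k) //= eqxx big1 ?addr0 // => i /negbTE ->.
by rewrite (bigD1 k) //= eqxx scale1r big1 ?addr0 // => i /negbTE ->; rewrite scale0r.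
Qed.

Lemma lower_bound (v : simplex R n) (s : R) (t : pt) :
  nondeg_simplex v -> conv_hull v `<=` @cube R n -> 0 < s ->
  @cube R n `<=` [set t + y | y in homothety v s] -> n%:R <= s.
Proof.
move=> nd vc s0 cs.
set lam := blam v.
have bv : bary v lam := blam_bary nd.
set ell := fun (i : 'I_n) k => L lam (unit_vec R i) k.
have Lexp : forall z k, L lam z k = \sum_i z ord0 i * ell i k.
  move=> z k; rewrite {1}(row_sum_delta z) (Lsum nd bv); apply: eq_bigr => i _.
  by rewrite (LZ nd bv).
have sell : forall i, \sum_k ell i k = 0 by move=> i; rewrite /ell (sumL bv).
have sellv : forall i, \sum_k ell i k * v k ord0 i = 1.
  move=> i; have := congr1 (fun M : pt => M ord0 i) (sumLv bv (unit_vec R i)).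
  rewrite summxE /unit_vec mxE !eqxx /= => e; rewrite -[RHS]e; apply: eq_bigr => k _.
  by rewrite mxE.
have v01 : forall k i, 0 <= v k ord0 i <= 1 by move=> k i; exact: (vc _ (vert_conv v k)).
pose negp (r : R) := if r < 0 then r else 0.
have negi : forall i, \sum_k negp (ell i k) <= -1.
  move=> i.
  have : 1 <= \sum_k (ell i k - negp (ell i k)).
    rewrite -(sellv i); apply: ler_sum => k _; rewrite /negp.
    have /andP [h0 h1] := v01 k i.
    case: ifP => hl; first by rewrite subrr; apply: mulr_le0_ge0 => //; exact: ltW.
    by rewrite subr0 -[X in _ <= X]mulr1 ler_wpM2l // leNgt hl.
  by rewrite sumrB sell sub0r lerNr.
pose N k := \sum_i negp (ell i k).
have sumN : \sum_k N k <= - n%:R.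
  rewrite /N exchange_big /=.
  apply: le_trans (ler_sum _ (fun i _ => negi i)) _.
  by rewrite sumr_const card_ord -mulNrn.
have Nk : forall k, L lam t k + (1 - s) / n.+1%:R - lam 0 k <= N k.
  move=> k.
  pose x : pt := \row_i (if ell i k < 0 then 1 else 0).
  have xc : cube x.
    by move=> i; rewrite mxE; case: ifP => _; rewrite ?ler01 ?lexx.
  have [_ [y yc <-] ex] := cs x xc.
  have LxN : L lam x k = N k.
    rewrite Lexp; apply: eq_bigr => i _; rewrite mxE /negp.
    by case: ifP => _; rewrite ?mul1r ?mul0r.
  have ly := lam_conv nd bv yc k.
  have Lc : L lam (centroid v) k = n.+1%:R^-1 - lam 0 k by rewrite /L lam_centroid.
  have Ly : - lam 0 k <= L lam y k by rewrite /L lerBrDr addNr.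
  rewrite -LxN -ex (LD nd bv) (LD nd bv) (LZ nd bv) (LB nd bv) Lc.
  have : s * (- lam 0 k) <= s * L lam y k by rewrite ler_pM2l.
  move: (L lam t k) (L lam y k) (lam 0 k) => a b c h.
  rewrite mulrBl mul1r.
  move: (n.+1%:R^-1) => d.
  rewrite mulrBr mulrBr -mulrN.
  move: (s * b) (s * d) (s * - c) h => p q r h; lra.
have : \sum_k (L lam t k + (1 - s) / n.+1%:R - lam 0 k) <= \sum_k N k.
  by apply: ler_sum => k _; exact: Nk.
rewrite sumrB big_split /= (sumL bv) sumr_const card_ord (proj1 (bv 0)).
have -> : (1 - s) / n.+1%:R *+ n.+1 = 1 - s.
  by rewrite -mulrnAr -mulr_natl mulfV ?pnatr_eq0 // mulr1.
move=> h.
have := le_trans h sumN.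
rewrite add0r; lra.
Qed.

End Lower.

Lemma had_rat n : hadamard_number n.+1 ->
  exists H : 'M[rat]_n.+1, (forall i j, H i j = 1 \/ H i j = -1) /\
   (forall k i, \sum_a H k a * H i a = (k == i)%:R * n.+1%:R) /\
   (forall a b, \sum_k H k a * H k b = (a == b)%:R * n.+1%:R).
Proof.
move=> [H [pm [u iv]]]; exists H; split => //.
have m0 : (n.+1%:R : rat) != 0 by rewrite pnatr_eq0.
split.
  move=> k i; have := mulmxV u; rewrite iv => /matrixP /(_ k i).
  rewrite !mxE => e; apply: (mulIf (x := n.+1%:R^-1)); first by rewrite invr_eq0.
  rewrite -[RHS]mulrA mulfV // mulr1 -[RHS]e mulr_suml; apply: eq_bigr => a _.
  by rewrite !mxE; ring.
move=> a b; have := mulVmx u; rewrite iv => /matrixP /(_ a b).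
rewrite !mxE => e; apply: (mulIf (x := n.+1%:R^-1)); first by rewrite invr_eq0.
rewrite -[RHS]mulrA mulfV // mulr1 -[RHS]e mulr_suml; apply: eq_bigr => k _.
by rewrite !mxE; ring.
Qed.

Lemma had_R (R : realType) n : hadamard_number n.+1 ->
  exists h : 'I_n.+1 -> 'I_n.+1 -> R, (forall i j, h i j = 1 \/ h i j = -1) /\
   (forall k, h k ord0 = 1) /\
   (forall k i, \sum_a h k a * h i a = (k == i)%:R * n.+1%:R) /\
   (forall a b, \sum_k h k a * h k b = (a == b)%:R * n.+1%:R).
Proof.
move=> /had_rat [H [pm [rw cl]]].
have sq : forall i j, H i j * H i j = 1 by move=> i j; case: (pm i j) => ->; ring.
exists (fun k a => ratr (H k a * H k ord0)); split.
  move=> i j; case: (pm i j) => ->; case: (pm i ord0) => ->;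
    rewrite ?mul1r ?mulr1 ?mulrNN ?mulr1 ?rmorph1 ?rmorphN ?rmorph1; by [left|right].
split; first by move=> k; rewrite sq rmorph1.
split.
  move=> k i.
  have -> : \sum_a ratr (H k a * H k ord0) * ratr (H i a * H i ord0) =
            ratr (\sum_a H k a * H k ord0 * (H i a * H i ord0)) :> R.
    by rewrite rmorph_sum; apply: eq_bigr => a _; rewrite rmorphM.
  have -> : \sum_a H k a * H k ord0 * (H i a * H i ord0) =
            H k ord0 * H i ord0 * \sum_a H k a * H i a.
    by rewrite mulr_sumr; apply: eq_bigr => a _; ring.
  rewrite rw; case: eqP => [->|_]; last by rewrite !mul0r mulr0 rmorph0.
  by rewrite sq mul1r !mul1r rmorph_nat.
move=> a b.
have -> : \sum_k ratr (H k a * H k ord0) * ratr (H k b * H k ord0) =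
          ratr (\sum_k H k a * H k b) :> R.
  rewrite rmorph_sum; apply: eq_bigr => k _; rewrite -rmorphM; congr ratr.
  have := sq k ord0; move: (H k ord0) => x hx.
  by rewrite mulrACA hx mulr1.
rewrite cl rmorphM rmorph_nat.
by rewrite !rmorph_nat.
Qed.

Section Gen.
Variable R : realType.
Variable n : nat.
Local Notation pt := 'rV[R]_n.
Variables (v : simplex R n) (lam : pt -> 'I_n.+1 -> R).
Hypothesis nd : nondeg_simplex v.
Hypothesis bv : bary v lam.
Local Notation c := (centroid v).
Local Notation m := (n.+1%:R : R).

Lemma lam_hom (s : R) y k :
  lam (c + s *: (y - c)) k = m^-1 + s * (lam y k - m^-1).
Proof.
have e : forall z, lam z k = lam 0 k + L lam z k by move=> z; rewrite /L; ring.
have Lc : L lam c k = m^-1 - lam 0 k by rewrite /L (lam_centroid nd bv).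
rewrite e (LD nd bv) (LZ nd bv s) (LB nd bv) Lc /L; ring.
Qed.

Lemma hom_in (s : R) x : 0 < s -> (forall k, (1 - s) / m <= lam x k) ->
  homothety v s x.
Proof.
move=> s0 H; exists (c + s^-1 *: (x - c)).
  apply: (conv_lam bv) => k; rewrite lam_hom.
  have := H k; move: (lam x k) => a ha.
  have s1 : 0 < s^-1 by rewrite invr_gt0.
  have : s * (s^-1 * (a - m^-1)) = a - m^-1 by rewrite mulrA mulfV ?gt_eqF // mul1r.
  have m0 : 0 < m^-1 by rewrite invr_gt0 ltr0n.
  move: (s^-1 * (a - m^-1)) => b hb.
  rewrite mulrBl mul1r in ha.
  have : 0 <= s * (m^-1 + b).
    rewrite mulrDr hb; move: (s / m) ha => q ha; move: (n.+1%:R^-1 : R) ha => r ha; lra.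


  by rewrite pmulr_rge0.
by rewrite (addrAC c) subrr add0r scalerA mulfV ?gt_eqF // scale1r addrC subrK.
Qed.

Lemma comb_hv (s : R) (l : 'I_n.+1 -> R) : \sum_i l i = 1 ->
  \sum_i l i *: homothety_vertices v s i = c + s *: (\sum_i l i *: v i - c).
Proof.
move=> l1; rewrite /homothety_vertices; move: (centroid v) => C.
rewrite (eq_bigr (fun i => l i *: C + s *: (l i *: v i) - s *: (l i *: C))); last first.
  by move=> i _; rewrite scalerDr !scalerA scalerBr addrA (mulrC s).
rewrite sumrB big_split /= -!scaler_sumr -!scaler_suml l1 !scale1r scalerBr.
by rewrite addrA.
Qed.

End Gen.

Lemma conv_cube (R : realType) n (v : simplex R n) :
  (forall k, @cube R n (v k)) -> conv_hull v `<=` @cube R n.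
Proof.
move=> vc z [l [l0 [l1 ->]]] j; rewrite summxE; apply/andP; split.
  by apply: sumr_ge0 => k _; rewrite mxE mulr_ge0 //; case/andP: (vc k j).
rewrite -l1; apply: ler_sum => k _; rewrite mxE -[X in _ <= X]mulr1.
by rewrite ler_wpM2l //; case/andP: (vc k j).
Qed.

Lemma axial_le1 (R : realType) n (K : set 'rV[R]_n) i l :
  K `<=` @cube R n -> axial_segment K i l -> l <= 1.
Proof.
move=> Kc [l0 [x H]].
have h0 := Kc _ (H 0 (ltac:(by rewrite lexx ler01))).
have h1 := Kc _ (H 1 (ltac:(by rewrite lexx ler01))).
have := h0 i; have := h1 i.
rewrite !mxE !eqxx /= mul0r mul1r mulr1 mul0r addr0.
case/andP => _ a /andP [b _]; lra.
Qed.

Section Had.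
Variable R : realType.
Variable n : nat.
Local Notation pt := 'rV[R]_n.
Variable h : 'I_n.+1 -> 'I_n.+1 -> R.
Hypothesis h1 : forall i j, h i j = 1 \/ h i j = -1.
Hypothesis h2 : forall k, h k ord0 = 1.
Hypothesis h3 : forall k i, \sum_a h k a * h i a = (k == i)%:R * n.+1%:R.
Hypothesis h4 : forall a b, \sum_k h k a * h k b = (a == b)%:R * n.+1%:R.

Local Notation hh k j := (h k (lift ord0 j)).

Lemma hsq k a : h k a * h k a = 1.
Proof. by case: (h1 k a) => ->; ring. Qed.

Lemma colsum j : \sum_k hh k j = 0.
Proof.
have := h4 (lift ord0 j) ord0.
rewrite eq_sym (negbTE (neq_lift _ _)) mul0r => e; rewrite -[RHS]e; apply: eq_bigr => k _.
by rewrite h2 mulr1.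
Qed.

Lemma rowsum k i : \sum_j hh k j * hh i j = (k == i)%:R * n.+1%:R - 1.
Proof. by rewrite -h3 big_ord_recl !h2 mulr1 (addrC 1) addrK. Qed.

Lemma colsum2 j j' : \sum_k hh k j * hh k j' = (j == j')%:R * n.+1%:R.
Proof. by rewrite h4 (inj_eq (@lift_inj _ ord0)). Qed.

Definition hv : simplex R n := fun k => \row_j ((1 - hh k j) / 2%:R).
Definition hlam (z : pt) (k : 'I_n.+1) : R :=
  n.+1%:R^-1 * (1 + \sum_j hh k j * (1 - 2%:R * z ord0 j)).

Lemma hlam_h z b : \sum_k hlam z k * hh k b = 1 - 2%:R * z ord0 b.
Proof.
rewrite /hlam.
rewrite (eq_bigr (fun k => n.+1%:R^-1 * (hh k b + \sum_j (1 - 2%:R * z ord0 j) * (hh k j * hh k b)))); last first.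
  move=> k _; rewrite -mulrA mulrDl mul1r mulr_suml; congr (_ * (_ + _)).
  by apply: eq_bigr => j _; ring.
rewrite -mulr_sumr big_split /= colsum add0r exchange_big /=.
rewrite (eq_bigr (fun j => (1 - 2%:R * z ord0 j) * ((j == b)%:R * n.+1%:R))); last first.
  by move=> j _; rewrite -mulr_sumr colsum2.
rewrite (bigD1 b) //= eqxx big1 ?addr0; last first.
  by move=> j /negbTE ->; rewrite mul0r mulr0.
by rewrite mul1r mulrCA mulVf ?pnatr_eq0 // mulr1.
Qed.

Lemma hlam_bary : bary hv hlam.
Proof.
move=> z; split.
  rewrite /hlam -mulr_sumr big_split /= sumr_const card_ord exchange_big /=.
  rewrite big1 ?addr0; first by rewrite mulVf // pnatr_eq0.
  by move=> j _; rewrite -mulr_suml colsum mul0r.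
apply/rowP => j; rewrite summxE.
rewrite (eq_bigr (fun k => 2%:R^-1 * (hlam z k - hlam z k * hh k j))); last first.
  by move=> k _; rewrite !mxE; ring.
rewrite -mulr_sumr sumrB hlam_h.
have -> : \sum_k hlam z k = 1.
  rewrite /hlam -mulr_sumr big_split /= sumr_const card_ord exchange_big /=.
  rewrite big1 ?addr0; first by rewrite mulVf // pnatr_eq0.
  by move=> j' _; rewrite -mulr_suml colsum mul0r.
by field.
Qed.

Lemma hv_entry k j : hv k ord0 j = (1 - hh k j) / 2%:R.
Proof. by rewrite mxE. Qed.

Lemma hv_nondeg : nondeg_simplex hv.
Proof.
move=> l s0 s1 i.
have lv : forall j, \sum_k l k * hv k ord0 j = 0.
  move=> j; have := congr1 (fun M : pt => M ord0 j) s1; rewrite summxE => e.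
  transitivity ((0 : pt) ord0 j); last by rewrite mxE.
  by rewrite -e; apply: eq_bigr => k _; rewrite [RHS]mxE.
have lh : forall j, \sum_k l k * hh k j = 0.
  move=> j; rewrite (eq_bigr (fun k => l k - 2%:R * (l k * hv k ord0 j))).
    by rewrite sumrB s0 -mulr_sumr lv mulr0 subrr.
  by move=> k _; rewrite hv_entry; field.
have : \sum_k l k * (1 + \sum_j hh k j * hh i j) = l i * n.+1%:R.
  rewrite (eq_bigr (fun k => l k * ((k == i)%:R * n.+1%:R))); last first.
    by move=> k _; rewrite rowsum addrC subrK.
  rewrite (bigD1 i) //= eqxx big1 ?addr0 ?mul1r // => k /negbTE ->.
  by rewrite mul0r mulr0.
rewrite (eq_bigr (fun k => l k + \sum_j hh i j * (l k * hh k j))); last first.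
  by move=> k _; rewrite mulrDr mulr1 mulr_sumr; congr (_ + _); apply: eq_bigr => j _; ring.
rewrite big_split /= s0 add0r exchange_big /= big1; last first.
  by move=> j _; rewrite -mulr_sumr lh mulr0.
by move/esym/eqP; rewrite mulf_eq0 pnatr_eq0 orbF => /eqP.
Qed.

Lemma hh01 k j : hh k j = 1 \/ hh k j = -1.
Proof. exact: h1. Qed.

Lemma hv_vertex k : cube_vertex (hv k).
Proof. move=> j; rewrite hv_entry; case: (hh01 k j) => ->; [left|right]; by field. Qed.

Lemma vertex_cube (z : pt) : cube_vertex z -> cube z.
Proof. by move=> H j; case: (H j) => ->; rewrite ?lexx ?ler01. Qed.

Lemma hv_dist i k : i != k -> dist2 (hv i) (hv k) = n.+1%:R / 2%:R.
Proof.
move=> ik; rewrite /dist2.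
rewrite (eq_bigr (fun j => 2%:R^-1 * (1 - hh i j * hh k j))); last first.
  move=> j _; rewrite !hv_entry.
  have := hsq i (lift ord0 j); have := hsq k (lift ord0 j).
  move: (hh i j) (hh k j) => a b ha hb.
  rewrite expr2; apply/eqP; rewrite -subr_eq0; apply/eqP.
  have -> : ((1 - a) / 2%:R - (1 - b) / 2%:R) * ((1 - a) / 2%:R - (1 - b) / 2%:R) -
     2%:R^-1 * (1 - a * b) = 4%:R^-1 * (a * a - 1) + 4%:R^-1 * (b * b - 1) by field.
  by rewrite ha hb !subrr !mulr0 addr0.
rewrite -mulr_sumr sumrB sumr_const card_ord rowsum (negbTE ik) mul0r sub0r opprK.
by rewrite natr1 mulrC.
Qed.

Lemma hterm_ge (z : pt) k j : cube z -> -1 <= hh k j * (1 - 2%:R * z ord0 j).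
Proof.
move=> /(_ j) /andP [a b]; case: (hh01 k j) => ->.
  rewrite mul1r; move: (z ord0 j) a b => x a b; lra.
rewrite mulN1r; move: (z ord0 j) a b => x a b; lra.
Qed.

Lemma hlam_cube (z : pt) k : cube z -> (1 - n%:R) / n.+1%:R <= hlam z k.
Proof.
move=> zc; rewrite /hlam [X in _ <= X]mulrC ler_wpM2r ?invr_ge0 ?ler0n //.
have : \sum_(j < n) (-1 : R) <= \sum_j hh k j * (1 - 2%:R * z ord0 j).
  by apply: ler_sum => j _; exact: hterm_ge.
rewrite sumr_const card_ord mulNrn.
move: (\sum_j _) => S; lra.
Qed.

Definition ant (k : 'I_n.+1) : pt := \row_j ((1 + hh k j) / 2%:R).

Lemma ant_vertex k : cube_vertex (ant k).
Proof. move=> j; rewrite mxE; case: (hh01 k j) => ->; [right|left]; by field. Qed.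

Lemma hlam_ant k : hlam (ant k) k = (1 - n%:R) / n.+1%:R.
Proof.
rewrite /hlam (eq_bigr (fun _ => -1)); last first.
  move=> j _; rewrite mxE; have := hsq k (lift ord0 j); move: (hh k j) => a ha.
  have -> : a * (1 - 2%:R * ((1 + a) / 2%:R)) = - (a * a) by field.
  by rewrite ha.
by rewrite sumr_const card_ord mulNrn mulrC.
Qed.

Lemma ant_unique (z : pt) k : cube_vertex z -> hlam z k = (1 - n%:R) / n.+1%:R ->
  z = ant k.
Proof.
move=> zv e.
have zc := vertex_cube zv.
have S : \sum_j (hh k j * (1 - 2%:R * z ord0 j) + 1) = 0.
  move: e; rewrite /hlam big_split /= sumr_const card_ord => e.
  have m0 : (n.+1%:R : R) != 0 by rewrite pnatr_eq0.
  have : 1 + \sum_j hh k j * (1 - 2%:R * z ord0 j) = 1 - n%:R.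
    by apply: (mulfI (x := n.+1%:R^-1)); rewrite ?invr_eq0 // e mulrC.
  rewrite -[_ *+ _]mulr_natr mul1r; move: (\sum_j _) => S0; lra.
have pos : forall j, 0 <= hh k j * (1 - 2%:R * z ord0 j) + 1.
  by move=> j; have := hterm_ge k j zc; rewrite -lerBlDr sub0r.
apply/rowP => j; rewrite mxE.
have := psumr_eq0P (fun j _ => pos j) S (i := j) isT.
case: (zv j) => ->; case: (hh01 k j) => ->; move=> H; by [field | lra].
Qed.

Definition seg (i : 'I_n) : pt := \row_j (if j == i then 0 else 2%:R^-1).

Lemma hlam_seg i t k : 0 <= t <= 1 -> 0 <= hlam (seg i + (t * 1) *: unit_vec R i) k.
Proof.
move=> /andP [t0 t1].
rewrite /hlam mulr_ge0 ?invr_ge0 ?ler0n // (bigD1 i) //= big1; last first.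
  move=> j /negbTE ji; rewrite !mxE ji /= mulr0 addr0.
  have -> : (1 - 2%:R * 2%:R^-1 : R) = 0 by field.
  by rewrite mulr0.
rewrite !mxE !eqxx /= mulr1 mulr1 add0r addr0.
case: (hh01 k i) => ->; lra.
Qed.

End Had.

Lemma eq_aux (R : realType) (N r l : R) : 1 <= N ->
  (1 - N) * r = r + N * (l - r) -> l = 0.
Proof.
move=> N1 e; have : N * l = 0 by move: e; rewrite mulrBl mul1r mulrBr; lra.
by move/eqP; rewrite mulf_eq0 => /orP [/eqP N0|/eqP //]; lra.
Qed.

Unset Implicit Arguments.
Set Strict Implicit.
Theorem theorem2p1 (R : realType) (n : nat) :
  (0 < n)%N -> hadamard_number n.+1 ->
  exists v : simplex R n,
    nondeg_simplex v /\ regular_simplex v /\ conv_hull v `<=` @cube R n /\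
    (* (1) *) (forall i, cube_vertex (v i)) /\
    (* (2) *) (xin_eq (R := R) n n%:R /\ xi_eq v n%:R /\ alpha_eq v n%:R) /\
    (* (3) *) (forall i, axial_diam_eq (conv_hull v) i 1) /\
    (* (4) *) (circumscribed (homothety_vertices v n%:R) (@cube R n) /\
               forall k, exists! q : 'rV[R]_n,
                 cube_vertex q /\ facet (homothety_vertices v n%:R) k q).
Proof.
move=> n0 /(had_R R) [h [h1 [h2 [h3 h4]]]].
have nd := hv_nondeg h2 h3.
have bv := hlam_bary h2 h4.
have vc : conv_hull (hv h) `<=` @cube R n.
  by apply: conv_cube => k; apply: vertex_cube; exact: hv_vertex.
have nR : 1 <= n%:R :> R by rewrite ler1n.
have n0R : 0 < n%:R :> R by rewrite ltr0n.
have cubeH : @cube R n `<=` homothety (hv h) n%:R.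
  by move=> x xc; apply: (hom_in nd bv) => // k; exact: hlam_cube.
have cube0 : forall (w : simplex R n) s, @cube R n `<=` homothety w s ->
    @cube R n `<=` [set 0 + y | y in homothety w s].
  by move=> w s H x /H hx; exists x => //; rewrite add0r.
have xiv : xi_eq (hv h) n%:R.
  split; first by split.
  by move=> s [s1 H]; apply: (lower_bound nd vc _ (cube0 _ _ H)); lra.
have hvw : forall y, conv_hull (hv h) y ->
    conv_hull (homothety_vertices (hv h) n%:R)
      (centroid (hv h) + n%:R *: (y - centroid (hv h))).
  move=> y yc; exists (hlam h y); split; first exact: (lam_conv nd bv yc).
  split; first exact: (proj1 (bv y)).
  by rewrite comb_hv ?(proj1 (bv y)) // (proj2 (bv y)).
have fac : forall k, facet (homothety_vertices (hv h) n%:R) k (ant h k).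
  move=> k; have [y yc e] := cubeH _ (vertex_cube (ant_vertex h1 k)).
  exists (hlam h y); split; first exact: (lam_conv nd bv yc).
  split; first exact: (proj1 (bv y)).
  split; last by rewrite comb_hv ?(proj1 (bv y)) // (proj2 (bv y)).
  have := lam_hom nd bv n%:R y k; rewrite e hlam_ant //.
  apply: eq_aux => //.
exists (hv h); split => //; split.
  by move=> i j k l ij kl; rewrite !hv_dist.
split => //; split; first by move=> i; exact: hv_vertex.
split.
  split; last first.
    split => //; split; first by split => //; exists 0; exact: cube0.
    by move=> s [s0 [t H]]; exact: (lower_bound nd vc s0 H).
  split; first by exists (hv h).
  move=> s [w [ndw [wc [[s1 H] _]]]].
  by apply: (lower_bound ndw wc _ (cube0 _ _ H)); lra.
split.
  move=> i; split.
    split; first exact: ler01.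
    exists (seg R i) => t ht; apply: (conv_lam bv) => k; exact: hlam_seg.
  by move=> l; exact: axial_le1 vc.
split.
  split; first by move=> x /cubeH [y yc <-]; exact: hvw.
  by move=> k; exists (ant h k); split => //; apply: vertex_cube; exact: ant_vertex.
move=> k; exists (ant h k); split; first by split => //; exact: ant_vertex.
move=> q [qv [l [l0 [l1 [lk e]]]]]; subst q.
rewrite comb_hv // in qv *; apply: esym; apply: (ant_unique h1 qv).
rewrite (lam_hom nd bv) (lam_comb nd bv l1) lk.
move: (n.+1%:R^-1 : R) => r; rewrite mulrC. ring.
Qed.
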